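(* Let $u_*>0$ be a positive solution of $n^{-1}\mathrm{Tr}\,G(u_*^2)=1$, and let $\tilde F(t)=-\mathcal L_n(-t^2)-t^2$. Then one can choose a sufficiently small $0<\kappa<u_*$ and a sufficiently large $C_0$ with $\log C_0^2>\mathcal L_n(0)+2$ such that there exist a contour $L_1\subset\{t:\Re t>0,\ \arg t\ge\pi/4\}$ and a constant $\sigma>0$ (depending on $L_1$) with $$iu_*+\kappa\in L_1,\qquad iC_0+C_0\in L_1,\qquad \Re\tilde F(t)\le\Re\tilde F(iu_* )-\sigma\quad\text{for } t\in L_1.$$
   Context: $A_0$ is a fixed $n\times n$ complex matrix and $z\in\mathbb C$; $Y_0(z)=(A_0-z)(A_0-z)^*$, $G(x)=(Y_0(z)+x)^{-1}$, $\mathcal L_n(x)=n^{-1}\log\det(Y_0(z)+x)$, where for $t$ in the upper half-plane $\mathcal L_n(-t^2)$ is defined by analytic continuation (so that $\Re\mathcal L_n(-t^2)=\frac12\int\log|\lambda-t^2|^2\,d\nu_{n,z}(\lambda)$, with $\nu_{n,z}$ the normalized eigenvalue counting measure of $Y_0(z)$). It is assumed that a positive solution $u_*$ of $n^{-1}\mathrm{Tr}\,G(u_*^2)=1$ exists. *)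

(* Defs.v *)
From mathcomp Require Import all_boot all_order all_algebra.
From mathcomp Require Import complex.
From mathcomp Require Import all_classical all_reals all_analysis.
Set Implicit Arguments. Unset Strict Implicit. Unset Printing Implicit Defensive.
Import Order.TTheory GRing.Theory Num.Theory ComplexField.
Local Open Scope ring_scope.

Section Defs.
Variable R : realType.

Definition adjmx (m p : nat) (M : 'M[R[i]]_(m, p)) : 'M[R[i]]_(p, m) :=
  (map_mx (fun w : R[i] => (w^*)%C) M)^T.

Definition Y0 (n : nat) (A0 : 'M[R[i]]_n) (z : R[i]) : 'M[R[i]]_n :=
  (A0 - z%:M) *m adjmx (A0 - z%:M).

Definition Gres (n : nat) (A0 : 'M[R[i]]_n) (z x : R[i]) : 'M[R[i]]_n :=
  invmx (Y0 A0 z + x%:M).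

(* Re L_n(-t^2) = n^{-1} log |det (Y_0(z) - t^2)|
   ( = (1/2) \int log |lambda - t^2|^2 d nu_{n,z}(lambda) ) *)
Definition ReLn_negsq (n : nat) (A0 : 'M[R[i]]_n) (z t : R[i]) : R :=
  (n%:R)^-1 * ln (Normc.normc (\det (Y0 A0 z - (t ^+ 2)%:M))).

Definition ReFt (n : nat) (A0 : 'M[R[i]]_n) (z t : R[i]) : R :=
  - ReLn_negsq A0 z t - complex.Re (t ^+ 2).

(* L_n(0) = n^{-1} log det Y_0(z) in the extended reals (-oo if det = 0;
   det Y_0(z) is real and >= 0). *)
Definition Ln0 (n : nat) (A0 : 'M[R[i]]_n) (z : R[i]) : \bar R :=
  if \det (Y0 A0 z) == 0 then -oo%E
  else ((n%:R)^-1 * ln (Normc.normc (\det (Y0 A0 z))))%:E.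

End Defs.

(* Main.v *)
Require Import Defs.
From mathcomp Require Import all_boot all_order all_algebra.
From mathcomp Require Import complex.
From mathcomp Require Import all_classical all_reals all_analysis.
From mathcomp Require Import lra ring.
Import Order.TTheory GRing.Theory Num.Theory ComplexField numFieldNormedType.Exports.
Local Open Scope ring_scope.
Set Implicit Arguments. Unset Strict Implicit.


Section Aux.
Local Open Scope sesquilinear_scope.
Lemma spec_Y0 (R : realType) (n : nat) (A0 : 'M[R[i]]_n) (z : R[i]) :
  exists lam : 'I_n -> R, (forall j, 0 <= lam j) /\
   (forall w : R[i], \det (Y0 A0 z - w%:M) = \prod_j ((lam j)%:C - w)%C) /\
   (forall x : R, 0 < x -> \tr (Gres A0 z x%:C%C) = \sum_j ((lam j + x)^-1)%:C%C).
Proof.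
set B := A0 - z%:M.
have adjE : adjmx B = B ^t* by rewrite /adjmx map_trmx.
set Y := Y0 A0 z.
have YE : Y = B *m B^t* by rewrite /Y /Y0 -/B adjE.
have Yh : Y^t* = Y.
  by rewrite YE trmx_mul map_mxM trmxCK.
have Yn : Y \is normalmx by apply/normalmxP; rewrite Yh.
have := (orthomx_spectralP Yn).
set P := spectralmx Y; set d := spectral_diag Y => Ydec.
have Pu : P \is unitarymx := spectral_unitarymx Y.
have Punit : P \in unitmx := spectral_unit Y.
have iP : invmx P = P^t* := invmx_unitary Pu.
have DE : diag_mx d = (P *m B) *m (P *m B)^t*.
  rewrite trmx_mul map_mxM !mulmxA -[P *m B *m B^t*]mulmxA -YE Ydec.
  by rewrite !mulmxA mulmxV // mul1mx -iP mulmxK.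
have dge0 : forall j, 0 <= d 0 j.
  move=> j; move/matrixP: DE => /(_ j j); rewrite mxE eqxx mulr1n => ->.
  rewrite mxE; apply: sumr_ge0 => k _; rewrite !mxE.
  exact: mul_conjC_ge0.
pose M (e : 'rV[R[i]]_n) := invmx P *m diag_mx e *m P.
have Ysh : forall w, Y + w%:M = M (d + const_mx w).
  move=> w; rewrite /M; have -> : diag_mx (d + const_mx w) = diag_mx d + w%:M.
    by apply/matrixP=> i k; rewrite !mxE mulrnDl.
  rewrite mulmxDr mulmxDl -Ydec; congr (_ + _).
  by rewrite scalar_mxC mulmxKV.
have detM : forall e, \det (M e) = \prod_j e 0 j.
  move=> e; rewrite /M !det_mulmx det_inv det_diag mulrC mulrA mulrV ?mul1r //.
have invM : forall e : 'rV[R[i]]_n, (forall j, e 0 j != 0) ->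
    invmx (M e) = M (\row_j (e 0 j)^-1).
  move=> e e0.
  have h : M e *m M (\row_j (e 0 j)^-1) = 1%:M.
    rewrite /M !mulmxA mulmxK // -(mulmxA _ (diag_mx e)).
    have -> : diag_mx e *m diag_mx (\row_j (e 0 j)^-1) = 1%:M.
      apply/matrixP=> i k; rewrite mul_diag_mx !mxE.
      by case: eqP => [->|]; rewrite ?mulr1n ?mulr0n ?mulr0 ?mulfV.
    by rewrite mulmx1 mulVmx.
  have [Mu _] := mulmx1_unit h.
  by rewrite -[RHS]mul1mx -(mulVmx Mu) -mulmxA h mulmx1.
have trM : forall e, \tr (M e) = \sum_j e 0 j.
  by move=> e; rewrite /M mxtrace_mulC mulmxA mulmxV // mul1mx mxtrace_diag.
exists (fun j => complex.Re (d 0 j)); split.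
  by move=> j; have := dge0 j; rewrite lecE /= => /andP[].
have dR : forall j, d 0 j = (complex.Re (d 0 j))%:C%C.
  by move=> j; have := dge0 j; case: (d 0 j) => a b; rewrite lecE /= => /andP[/eqP -> _].
split.
  move=> w; have -> : Y0 A0 z - w%:M = Y + (-w)%:M by rewrite raddfN.
  rewrite Ysh detM; apply: eq_bigr => j _.
  by rewrite !mxE -dR.
move=> x x0; rewrite /Gres -/Y Ysh invM ?trM.
  apply: eq_bigr => j _; rewrite !mxE dR -rmorphD /= fmorphV //.
move=> j; rewrite !mxE dR -rmorphD /= -(rmorph0 (real_complex R)) inj_eq; last exact: complexI.
by apply: lt0r_neq0; rewrite ltr_wpDl //; have := dge0 j; rewrite lecE /= => /andP[].
Qed.
End Aux.

Section RealPart.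
Variable R : realType.
Lemma sq_cplx (x y : R) : (Complex x y) ^+ 2 = Complex (x^+2 - y^+2) (2 * x * y).
Proof. by rewrite expr2 /=; congr Complex; ring. Qed.

Lemma normc_sub_sq (l x y : R) :
  Normc.normc (l%:C%C - (Complex x y) ^+ 2) =
  Num.sqrt ((l - (x^+2 - y^+2))^+2 + (2 * x * y)^+2).
Proof. by rewrite sq_cplx /=; congr Num.sqrt; ring. Qed.

Lemma normc_prod (n : nat) (f : 'I_n -> R[i]) :
  Normc.normc (\prod_j f j) = \prod_j Normc.normc (f j).
Proof.
apply: (big_morph _ (@Normc.normcM R) (@Normc.normc1 R)).
Qed.

Lemma ln_prod (n : nat) (f : 'I_n -> R) : (forall j, 0 < f j) ->
  ln (\prod_j f j) = \sum_j ln (f j).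
Proof.
move=> fp; rewrite /index_enum; elim: (Finite.enum _) => [|j s IH].
  by rewrite !big_nil ln1.
rewrite !big_cons lnM ?IH //; rewrite posrE //.
by apply: prodr_gt0 => i _.
Qed.

Lemma ln_sqrt (D : R) : 0 < D -> ln (Num.sqrt D) = ln D / 2.
Proof.
move=> D0; have : ln (Num.sqrt D ^+ 2) = ln (Num.sqrt D) *+ 2.
  by rewrite lnXn // sqrtr_gt0.
rewrite sqr_sqrtr ?ltW // => ->; move: (ln (Num.sqrt D)) => l; rewrite -mulr_natr; lra.
Qed.

Lemma term_ineq (a r q K Bd : R) : 0 < a -> 0 <= r -> 0 <= K ->
  K <= q^+2 - 3 * r^+2 -> 0 < (a - r)^+2 + q^+2 -> (a - r)^+2 + q^+2 <= Bd ->
  K / (2 * Bd) <= (ln ((a - r)^+2 + q^+2) - ln (a^+2)) / 2 + r / a.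
Proof.
move=> a0 r0 K0 hK; set D := (a - r)^+2 + q^+2 => D0 DB.
have a20 : 0 < a ^+ 2 by rewrite exprn_gt0.
have lnb : 1 - a^+2 / D <= ln D - ln (a^+2).
  have h : -1 < a^+2 / D - 1 by rewrite ltrBrDr addNr divr_gt0.
  have := le_ln1Dx h; rewrite addrC subrK ln_div ?posrE //.
  by move=> H; lra.
have B0 : 0 < Bd by apply: lt_le_trans DB.
have step1 : K / Bd <= K / D.
  by apply: ler_wpM2l => //; rewrite lef_pV2 ?posrE.
set N := a * (q^+2 - 3 * r^+2) + 2 * r * (q^+2 + r^+2).
have NE : 1 - a^+2 / D + 2 * r / a = N / (a * D).
  by rewrite /N /D; field; rewrite !lt0r_neq0.
have NK : a * K <= N.
  rewrite /N; have : 0 <= 2 * r * (q^+2 + r^+2).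
    by apply: mulr_ge0; [lra| apply: addr_ge0; apply: sqr_ge0].
  have : a * K <= a * (q^+2 - 3 * r^+2) by apply: ler_wpM2l => //; exact: ltW.
  lra.
have step2 : K / D <= N / (a * D).
  have -> : K / D = (a * K) / (a * D).
    by field; apply/andP; split; apply: lt0r_neq0.
  by apply: ler_wpM2r => //; rewrite invr_ge0 ltW // mulr_gt0.
have : K / Bd <= 1 - a^+2 / D + 2 * r / a by rewrite NE; exact: le_trans step1 step2.
have -> : K / (2 * Bd) = (K / Bd) / 2 by field; rewrite lt0r_neq0.
have -> : r / a = (2 * r / a) / 2 by field; rewrite lt0r_neq0.
move: (K / Bd) (a^+2 / D) (2 * r / a) lnb => x y w lnb' H.
lra.
Qed.

Definition Dt n (lam : 'I_n -> R) (x y : R) (j : 'I_n) :=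
  (lam j - (x^+2 - y^+2))^+2 + (2 * x * y)^+2.
Definition Fxy n (lam : 'I_n -> R) (x y : R) :=
  - (n%:R^-1 * \sum_j (ln (Dt lam x y j) / 2)) - (x^+2 - y^+2).

Lemma sum_ineq n (lam : 'I_n -> R) (u x y K : R) (Bd : 'I_n -> R) :
  (0 < n)%N -> (forall j, 0 <= lam j) -> 0 < u ->
  n%:R^-1 * \sum_j (lam j + u^+2)^-1 = 1 ->
  0 <= u^+2 + (x^+2 - y^+2) -> 0 <= K ->
  K <= (2 * x * y)^+2 - 3 * (u^+2 + (x^+2 - y^+2))^+2 ->
  (forall j, 0 < Dt lam x y j) -> (forall j, Dt lam x y j <= Bd j) ->
  Fxy lam x y <= Fxy lam 0 u - n%:R^-1 * \sum_j (K / (2 * Bd j)).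
Proof.
move=> n0 l0 u0 hS r0 K0 hK D0 DB.
set r := u^+2 + (x^+2 - y^+2).
have aE : forall j, Dt lam x y j = (lam j + u^+2 - r)^+2 + (2 * x * y)^+2.
  by move=> j; rewrite /Dt /r; congr (_ + _); congr (_ ^+ _); ring.
have a0E : forall j, Dt lam 0 u j = (lam j + u^+2)^+2.
  by move=> j; rewrite /Dt; rewrite !mulr0 !mul0r expr0n /= addr0; congr (_ ^+ _); ring.
have ap : forall j, 0 < lam j + u^+2 by move=> j; rewrite ltr_wpDl // exprn_gt0.
have T : 0 <= \sum_j ((ln (Dt lam x y j) - ln ((lam j + u^+2)^+2)) / 2 + r / (lam j + u^+2) - K / (2 * Bd j)).
  apply: sumr_ge0 => j _; rewrite subr_ge0 aE.
  apply: term_ineq => //; rewrite -aE //.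
have ni0 : 0 < n%:R^-1 :> R by rewrite invr_gt0 ltr0n.
set S1 := \sum_j (ln (Dt lam x y j) / 2).
set S0 := \sum_j (ln ((lam j + u^+2)^+2) / 2).
set Sa := \sum_j (lam j + u^+2)^-1.
set Sk := \sum_j (K / (2 * Bd j)).
have E : \sum_j ((ln (Dt lam x y j) - ln ((lam j + u^+2)^+2)) / 2 + r / (lam j + u^+2) - K / (2 * Bd j))
   = S1 - S0 + r * Sa - Sk.
  rewrite /S1 /S0 /Sa /Sk mulr_sumr -sumrB -big_split -sumrB; apply: eq_bigr => j _.
  by rewrite /= mulrBl.
have F0 : Fxy lam 0 u = - (n%:R^-1 * S0) + u^+2.
  rewrite /Fxy /S0 expr0n /= sub0r opprK; congr (- (_ * _) + _).
  by apply: eq_bigr => j _; rewrite a0E.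
rewrite F0 /Fxy -/S1; move: T; rewrite E => T.
have := mulr_ge0 (ltW ni0) T.
move: hS; rewrite -/Sa.
move: (n%:R^-1) ni0 => ni ni0 hS.
move: r0; rewrite -/r => r0.
have hr : ni * (r * Sa) = r by rewrite mulrCA hS mulr1.
rewrite /r in hr *; nra.
Qed.


End RealPart.



Lemma ReFt_formula (R : realType) n (A0 : 'M[R[i]]_n) z (lam : 'I_n -> R) (x y : R) :
  (forall w : R[i], \det (Y0 A0 z - w%:M) = \prod_j ((lam j)%:C - w)%C) ->
  (forall j, 0 < Dt lam x y j) ->
  ReFt A0 z (Complex x y) = Fxy lam x y.
Proof.
move=> hdet hD.
rewrite /ReFt /ReLn_negsq hdet normc_prod.
under eq_bigr => j _ do rewrite normc_sub_sq.
rewrite ln_prod; last by move=> j; rewrite sqrtr_gt0; exact: hD.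
under eq_bigr => j _ do rewrite (ln_sqrt (hD j)).
by rewrite sq_cplx.
Qed.

Lemma Dt_pos (R : realType) n (lam : 'I_n -> R) x y : 0 < x -> 0 < y -> forall j, 0 < Dt lam x y j.
Proof.
move=> x0 y0 j; rewrite /Dt; apply: ltr_wpDl; first exact: sqr_ge0.
by rewrite exprn_gt0 // !mulr_gt0.
Qed.

Lemma Dt_pos0 (R : realType) n (lam : 'I_n -> R) u : 0 < u -> (forall j, 0 <= lam j) -> forall j, 0 < Dt lam 0 u j.
Proof.
move=> u0 l0 j; rewrite /Dt !mulr0 mul0r expr0n /= addr0 sub0r opprK exprn_gt0 //.
by rewrite ltr_wpDl // exprn_gt0.
Qed.

Lemma n_gt0 (R : realType) n (c : R[i]) : (n%:R)^-1 * c = 1 -> (0 < n)%N.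
Proof.
by case: n => [|n] //; rewrite invr0 mul0r => /eqP; rewrite eq_sym oner_eq0.
Qed.

Section Pt.
Variable R : realType.
Lemma c_id : continuous (fun s : R => s).
Proof. by move=> s; exact: cvg_id. Qed.
Lemma c_aff (a b : R) (f : R -> R) : continuous f -> continuous (fun s => a + b * f s).
Proof.
move=> fc s.
have := @continuousD R R^o R (fun=> a) (fun s => b * f s) s.
apply; first exact: cst_continuous.
have := @continuousM R R (fun=> b) f s; apply; [exact: cst_continuous | exact: fc].
Qed.
Lemma c_m1 : continuous (fun s : R => Num.min (0 + 2 * s) 1).
Proof.
move=> s; have := (@continuous_min R R (fun s => 0 + 2 * s) (fun=> 1) s); apply.
  exact: (@c_aff 0 2 _ c_id s).
exact: cst_continuous.
Qed.
Lemma c_m2 : continuous (fun s : R => Num.max (-1 + 2 * s) 0).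
Proof.
move=> s; have := (@continuous_max R R (fun s => -1 + 2 * s) (fun=> 0) s); apply.
  exact: (@c_aff (-1) 2 _ c_id s).
exact: cst_continuous.
Qed.
Lemma c_sum2 (a b c : R) (f g : R -> R) : continuous f -> continuous g ->
  continuous (fun s => a + b * f s + c * g s).
Proof.
move=> fc gc s.
have := @continuousD R R^o R (fun s => a + b * f s) (fun s => c * g s) s.
apply; first exact: (@c_aff a b _ fc s).
have := @continuousM R R (fun=> c) g s; apply; [exact: cst_continuous | exact: gc].
Qed.

Definition Bd n (lam : 'I_n -> R) (u C0 : R) (j : 'I_n) :=
  (lam j + u^+2)^+2 + u^+4 + 4 * C0^+4.

Lemma point_ok n (lam : 'I_n -> R) (u k C0 x y : R) :
  (0 < n)%N -> (forall j, 0 <= lam j) -> 0 < u ->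
  n%:R^-1 * \sum_j (lam j + u^+2)^-1 = 1 ->
  0 < x -> 0 < y -> x <= C0 -> y <= C0 ->
  0 <= u^+2 + (x^+2 - y^+2) -> u^+2 + (x^+2 - y^+2) <= u^+2 ->
  k^+2 * u^+2 <= (2 * x * y)^+2 - 3 * (u^+2 + (x^+2 - y^+2))^+2 ->
  Fxy lam x y <= Fxy lam 0 u - n%:R^-1 * \sum_j (k^+2 * u^+2 / (2 * Bd lam u C0 j)).
Proof.
move=> n0 l0 u0 hS x0 y0 xC yC r0 r1 hK.
apply: sum_ineq => //.
- by rewrite mulr_ge0 // sqr_ge0.
- exact: Dt_pos.
move=> j; rewrite /Dt /Bd.
move: r0 r1; set r := u^+2 + (x^+2 - y^+2) => r0 r1.
have -> : lam j - (x^+2 - y^+2) = (lam j + u^+2) - r by rewrite /r; ring.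
have a0 : 0 <= lam j + u^+2 by rewrite addr_ge0 ?l0 ?sqr_ge0.
have h1 : (lam j + u^+2 - r)^+2 <= (lam j + u^+2)^+2 + u^+4.
  have : r^+2 <= u^+4 by rewrite (_ : u^+4 = (u^+2)^+2) ?ler_sqr ?nnegrE ?sqr_ge0 //; rewrite -exprM.
  move: (lam j + u^+2) a0 r0 => a a0 r0'; move: r r0' r1 => r' r0' r1' hr.
  nra.
have h2 : (2 * x * y)^+2 <= 4 * C0^+4.
  have xy0 : 0 <= x * y by rewrite mulr_ge0 // ltW.
  have hxy : x * y <= C0^+2 by rewrite expr2; apply: ler_pM => //; apply: ltW.
  have H : (x * y) * (x * y) <= C0^+2 * C0^+2 by apply: ler_pM.
  have -> : C0^+4 = C0^+2 * C0^+2 by rewrite -exprD.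
  have -> : (2 * x * y)^+2 = 4 * ((x * y) * (x * y)) by ring.
  move: H; move: ((x * y) * (x * y)) (C0^+2 * C0^+2) => w v H. lra.
lra.
Qed.

End Pt.

Unset Implicit Arguments. Set Strict Implicit.


Lemma path_case (R : realType) (s : R) : 0 <= s <= 1 ->
  (Num.min (0 + 2 * s) 1 = 2 * s /\ Num.max (-1 + 2 * s) 0 = 0 /\ 0 <= 2 * s <= 1) \/
  (Num.min (0 + 2 * s) 1 = 1 /\ Num.max (-1 + 2 * s) 0 = -1 + 2 * s /\ 1 <= 2 * s <= 2).
Proof.
move=> /andP[s0 s1]; rewrite add0r.
have [h|h] := leP (2 * s) 1.
  left; rewrite max_r; last by lra.
  by split => //; split => //; apply/andP; split => //; lra.
right; rewrite max_l; last by lra.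
by split => //; split => //; apply/andP; split; lra.
Qed.

Lemma sqle (R : realType) (a b : R) : 0 <= a -> a <= b -> a^+2 <= b^+2.
Proof. by move=> a0 ab; rewrite !expr2; apply: ler_pM. Qed.

Lemma seg1_facts (R : realType) (k u C0 t x0 : R) : 0 < k -> k < u -> u <= C0 ->
  0 <= t <= 1 -> x0 = k + (u - k) * t ->
  [/\ 0 < x0, x0 <= u & x0 <= C0] /\ [/\ 0 <= u^+2 + (x0^+2 - u^+2), u^+2 + (x0^+2 - u^+2) <= u^+2
    & k^+2 * u^+2 <= (2 * x0 * u)^+2 - 3 * (u^+2 + (x0^+2 - u^+2))^+2].
Proof.
move=> k0 ku uC /andP[t0 t1] ->.
have h1 : 0 <= (u - k) * t by rewrite mulr_ge0 // subr_ge0 ltW.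
have h2 : (u - k) * t <= u - k by rewrite ler_piMr // subr_ge0 ltW.
set x := k + (u - k) * t.
have xpos : 0 < x by rewrite /x; lra.
have xk : k <= x by rewrite /x; lra.
have xu : x <= u by rewrite /x; lra.
have -> : u^+2 + (x^+2 - u^+2) = x^+2 by ring.
split; first by split => //; exact: le_trans uC.
split.
- exact: sqr_ge0.
- exact: sqle (ltW xpos) xu.
have hx2 : k^+2 <= x^+2 by apply: sqle (ltW k0) xk.
have hxu2 : x^+2 <= u^+2 by apply: sqle (ltW xpos) xu.
have -> : (2 * x * u)^+2 - 3 * (x^+2)^+2 = x^+2 * (4 * u^+2 - 3 * x^+2) by ring.
have u2 : 0 <= u^+2 := sqr_ge0 u.
move: hx2 hxu2 u2 (sqr_ge0 k) (sqr_ge0 x); move: (x^+2) (u^+2) (k^+2) => X U K.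
nra.
Qed.

Lemma seg2_facts (R : realType) (k u C0 t v0 : R) : 0 < k -> k < u -> u <= C0 ->
  0 <= t <= 1 -> v0 = u + (C0 - u) * t ->
  [/\ 0 < v0, u <= v0 & v0 <= C0] /\ [/\ 0 <= u^+2 + (v0^+2 - v0^+2), u^+2 + (v0^+2 - v0^+2) <= u^+2
    & k^+2 * u^+2 <= (2 * v0 * v0)^+2 - 3 * (u^+2 + (v0^+2 - v0^+2))^+2].
Proof.
move=> k0 ku uC /andP[t0 t1] ->.
have h1 : 0 <= (C0 - u) * t by rewrite mulr_ge0 // subr_ge0.
have h2 : (C0 - u) * t <= C0 - u by rewrite ler_piMr // subr_ge0.
set v := u + (C0 - u) * t.
have vu : u <= v by rewrite /v; lra.
have vpos : 0 < v by rewrite /v; lra.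
have -> : u^+2 + (v^+2 - v^+2) = u^+2 by ring.
split; first by split => //; rewrite /v; lra.
have hk2 : k^+2 <= u^+2 by apply: sqle (ltW k0) (ltW ku).
have hv2 : u^+2 <= v^+2 by apply: sqle (ltW (lt_trans k0 ku)) vu.
split; [exact: sqr_ge0 | by [] |].
have -> : (2 * v * v)^+2 - 3 * (u^+2)^+2 = 4 * (v^+2)^+2 - 3 * (u^+2)^+2 by ring.
move: hk2 hv2 (sqr_ge0 u) (sqr_ge0 k); move: (v^+2) (u^+2) (k^+2) => V U K.
nra.
Qed.


Local Open Scope classical_set_scope.

Theorem lemma1 (R : realType) (n : nat) (A0 : 'M[R[i]]_n) (z : R[i])
  (ustar : R) (hu : 0 < ustar)
  (htr : (n%:R)^-1 * \tr (Gres A0 z ((ustar ^+ 2)%:C)%C) = 1) :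
  exists kappa0 : R, 0 < kappa0 /\ kappa0 <= ustar /\
  forall kappa : R, 0 < kappa -> kappa < kappa0 ->
  exists C0' : R, forall C0 : R, C0' <= C0 ->
    (Ln0 A0 z + 2%:E < (ln (C0 ^+ 2))%:E)%E /\
    exists (gx gy : R -> R),
      {within `[(0:R), 1], continuous gx} /\ {within `[(0:R), 1], continuous gy} /\
      (gx 0 = kappa /\ gy 0 = ustar) /\ (gx 1 = C0 /\ gy 1 = C0) /\
      exists sigma : R, 0 < sigma /\
        forall s : R, 0 <= s <= 1 ->
          [/\ 0 < gx s,
              pi / 4 <= atan (gy s / gx s)
              & ReFt A0 z (gx s +i* gy s)%C
                  <= ReFt A0 z (0 +i* ustar)%C - sigma].
Proof.
have n0 := n_gt0 htr.
have [lam [l0 [hdet htrf]]] := spec_Y0 A0 z.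
have hS : n%:R^-1 * \sum_j (lam j + ustar^+2)^-1 = 1.
  move: htr; rewrite htrf ?exprn_gt0 //.
  rewrite -(rmorph_nat (real_complex R)) -fmorphV -rmorph_sum -rmorphM.
  by rewrite -(rmorph1 (real_complex R)) => /complexI.
exists ustar; split => //; split => // kappa k0 ku.
set L := n%:R^-1 * ln (Normc.normc (\det (Y0 A0 z))).
exists (ustar + 1 + expR (L + 2)) => C0 hC0.
have eL := expR_gt0 (L + 2).
have lnE : ln (expR (L + 2)) = L + 2 by rewrite expRK.
move: (expR (L + 2)) eL hC0 lnE => E eL hC0 lnE.
have C0u : ustar <= C0 by move: hC0 eL hu; clear => hC0 eL hu; lra.
have C01 : 1 <= C0 by move: hC0 eL hu; clear => hC0 eL hu; lra.
have C0e : E < C0 by move: hC0 eL hu; clear => hC0 eL hu; lra.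
split.
  rewrite /Ln0; case: ifP => _; first by rewrite addNye ltNyr.
  rewrite -EFinD lte_fin -/L.
  rewrite -lnE ltr_ln ?posrE ?exprn_gt0 //; last by apply: lt_le_trans C01.
  apply: (lt_le_trans C0e); rewrite expr2 ler_peMl //; exact: le_trans C01.
pose gx := fun s : R => kappa + (ustar - kappa) * Num.min (0 + 2 * s) 1 + (C0 - ustar) * Num.max (-1 + 2 * s) 0.
pose gy := fun s : R => ustar + (C0 - ustar) * Num.max (-1 + 2 * s) 0.
exists gx, gy.
split; first by apply: continuous_subspaceT; rewrite /gx; exact: (c_sum2 (@c_m1 R) (@c_m2 R)).
split; first by apply: continuous_subspaceT; rewrite /gy; exact: (c_aff (@c_m2 R)).
have hs0 : 0 <= (0:R) <= 1 by rewrite lexx ler01.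
have hs1 : 0 <= (1:R) <= 1 by rewrite lexx ler01.
split.
  rewrite /gx /gy; case: (@path_case R 0 hs0) => [[-> [-> _]] | [_ [_ /andP[h _]]]].
    by rewrite !mulr0 !addr0.
  by move: h; rewrite mulr0 ler10.
split.
  rewrite /gx /gy; case: (@path_case R 1 hs1) => [[_ [_ /andP[_ h]]] | [-> [-> _]]].
    by move: h; clear => h; lra.
  by rewrite mulr1; split; ring.
have u0 := hu.
exists (n%:R^-1 * \sum_j (kappa^+2 * ustar^+2 / (2 * Bd lam ustar C0 j))).
split.
  apply: mulr_gt0; first by rewrite invr_gt0 ltr0n.
  have tp : forall j, 0 < kappa^+2 * ustar^+2 / (2 * Bd lam ustar C0 j).
    move=> j; apply: divr_gt0; first by rewrite mulr_gt0 // exprn_gt0.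
    apply: mulr_gt0 => //; rewrite /Bd.
    have h1 := sqr_ge0 (lam j + ustar^+2).
    have h2 : 0 < ustar^+4 := exprn_gt0 4 u0.
    have h3 : 0 <= C0^+4 := exprn_ge0 4 (le_trans (ltW u0) C0u).
    move: h1 h2 h3; move: ((lam j + ustar^+2)^+2) (ustar^+4) (C0^+4); clear => a b c h1 h2 h3; lra.
  rewrite (bigD1 (Ordinal n0)) //=; apply: ltr_wpDr; last exact: tp.
  by apply: sumr_ge0 => j _; apply: ltW.
move=> s hs; rewrite /gx /gy.
case: (@path_case R s hs) => [[-> [-> ht]] | [-> [-> /andP[t1 t2]]]].
  rewrite !mulr0 !addr0.
  have [[xpos xu xC] [r0 r1 hK]] := @seg1_facts _ _ _ _ _ (kappa + (ustar - kappa) * (2 * s)) k0 ku C0u ht erefl.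
  move: xpos xu xC r0 r1 hK; move: (kappa + (ustar - kappa) * (2 * s)) => x xpos xu xC r0 r1 hK.
  split => //.
    by rewrite -atan1; apply: le_atan; rewrite ler_pdivlMr // mul1r.
  rewrite (ReFt_formula hdet (Dt_pos lam xpos u0)) (ReFt_formula hdet (Dt_pos0 u0 l0)).
  by apply: point_ok.
have ht : 0 <= -1 + 2 * s <= 1 by apply/andP; split; move: t1 t2; clear; lra.
set v := ustar + (C0 - ustar) * (-1 + 2 * s).
have -> : kappa + (ustar - kappa) * 1 + (C0 - ustar) * (-1 + 2 * s) = v by rewrite /v; ring.
have [[vpos vu vC] [r0 r1 hK]] := @seg2_facts _ _ _ _ _ v k0 ku C0u ht erefl.
move: vpos vu vC r0 r1 hK; move: v => v vpos vu vC r0 r1 hK.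
split => //.
  by rewrite divff ?lt0r_neq0 // atan1.
rewrite (ReFt_formula hdet (Dt_pos lam vpos vpos)) (ReFt_formula hdet (Dt_pos0 u0 l0)).
by apply: point_ok.
Qed.
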